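(* Let $K>0$, $x_0<\alpha$ be real constants, and let $f$ be a continuous function on $[x_0,\alpha)$ with $f(x)>0$ on $[x_0,\alpha)$ such that either $f$ is decreasing on $[x_0,\alpha)$ or $\lim_{x\to\alpha-0}f(x)=0$. Then for every $w_0>0$ there exists a unique global positive solution $w$ on $[x_0,\alpha)$ of the initial value problem \[ w'+K=\frac{f(x)}{w},\quad x_0<x<\alpha,\qquad w(x_0)=w_0 \] (equivalently, of $(w'+K)w=f(x)$, $x_0<x<\alpha$, $w(x_0)=w_0$). *)

(* Defs.v *)
From Stdlib Require Import Reals.
From Coquelicot Require Export Coquelicot.
Export Reals.
Open Scope R_scope.

Definition continuous_on_Ico (g : R -> R) (a b : R) : Prop :=
  forall x, a <= x < b ->
    filterlim g (within (fun y => a <= y < b) (locally x)) (locally (g x)).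

Definition decreasing_on_Ico (g : R -> R) (a b : R) : Prop :=
  forall x y, a <= x -> x <= y -> y < b -> g y <= g x.

Definition is_global_pos_solution (K x0 alpha w0 : R) (f w : R -> R) : Prop :=
  continuous_on_Ico w x0 alpha /\
  (forall x, x0 <= x < alpha -> 0 < w x) /\
  (forall x, x0 < x < alpha -> is_derive w x (f x / w x - K)) /\
  w x0 = w0.

(* Main.v *)
Require Import Defs.
From Stdlib Require Import Reals.
From Coquelicot Require Import Coquelicot.
From Stdlib Require Import Lra Lia ClassicalEpsilon.
Open Scope R_scope.

Lemma ball_R (x e y : R) : ball x e y <-> Rabs (y - x) < e.
Proof. unfold ball; simpl; unfold AbsRing_ball, abs, minus, plus, opp; simpl. tauto. Qed.

Lemma eps_cont (h : R -> R) x :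
  (forall eps, 0 < eps -> exists d, 0 < d /\ forall y, Rabs (y - x) < d -> Rabs (h y - h x) < eps) ->
  continuous h x.
Proof.
  intros H. apply filterlim_locally. intros eps.
  destruct (H eps (cond_pos eps)) as [d [Hd Hy]].
  exists (mkposreal d Hd). intros y Hy'. apply ball_R. apply Hy. apply ball_R. exact Hy'.
Qed.

Lemma cont_eps (h : R -> R) x : continuous h x ->
  forall eps, 0 < eps -> exists d, 0 < d /\ forall y, Rabs (y - x) < d -> Rabs (h y - h x) < eps.
Proof.
  intros H eps Heps. destruct (proj1 (filterlim_locally h (h x)) H (mkposreal eps Heps)) as [d Hd].
  exists d. split. apply cond_pos. intros y Hy. apply (proj1 (ball_R _ _ _)). apply Hd. apply ball_R. exact Hy.
Qed.

Definition cont_in (a b : R) (h : R -> R) := forall x, a <= x <= b -> forall eps, 0 < eps ->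
  exists d, 0 < d /\ forall y, a <= y <= b -> Rabs (y - x) < d -> Rabs (h y - h x) < eps.

Definition clamp a b t := Rmax a (Rmin t b).

Lemma clamp_in a b t : a <= b -> a <= clamp a b t <= b.
Proof. intros. unfold clamp, Rmax, Rmin. repeat destruct Rle_dec; lra. Qed.

Lemma clamp_id a b t : a <= t <= b -> clamp a b t = t.
Proof. intros. unfold clamp, Rmax, Rmin. repeat destruct Rle_dec; lra. Qed.

Lemma clamp_lip a b s t : a <= b -> Rabs (clamp a b s - clamp a b t) <= Rabs (s - t).
Proof. intros. unfold clamp, Rmax, Rmin. repeat destruct Rle_dec; unfold Rabs; repeat destruct Rcase_abs; lra. Qed.

Lemma clamp_cont a b h : a <= b -> cont_in a b h -> forall t, continuous (fun s => h (clamp a b s)) t.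
Proof.
  intros Hab H t. apply eps_cont. intros eps Heps.
  destruct (H (clamp a b t) (clamp_in a b t Hab) eps Heps) as [d [Hd Hy]].
  exists d. split; auto. intros y Hy'. apply Hy. apply clamp_in; auto.
  eapply Rle_lt_trans. apply clamp_lip; auto. auto.
Qed.

Lemma cont_cont_in a b h : (forall t, continuous h t) -> cont_in a b h.
Proof.
  intros H x _ eps Heps. destruct (cont_eps h x (H x) eps Heps) as [d [Hd Hy]].
  exists d; split; auto.
Qed.

Lemma Ico_cont_in a alpha b h : continuous_on_Ico h a alpha -> b < alpha -> cont_in a b h.
Proof.
  intros H Hb x Hx eps Heps.
  assert (Hx' : a <= x < alpha) by lra.
  destruct (proj1 (filterlim_locally _ _) (H x Hx') (mkposreal eps Heps)) as [d Hd].
  exists d. split. apply cond_pos. intros y Hy Hyx.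
  apply (proj1 (ball_R _ _ _)). apply Hd. apply ball_R. auto. lra.
Qed.

Lemma RInt_cont (g : R -> R) a : (forall t, continuous g t) -> forall x, continuous (fun x => RInt g a x) x.
Proof.
  intros Hg x. apply (@ex_derive_continuous R_AbsRing R_NormedModule). exists (g x).
  apply (is_derive_RInt g (fun x => RInt g a x) a x); auto.
  apply filter_forall. intros y. apply (@RInt_correct R_CompleteNormedModule). apply ex_RInt_continuous. intros; auto.
Qed.

Lemma exRc (g : R -> R) a x : (forall t, continuous g t) -> ex_RInt g a x.
Proof. intros; apply (@ex_RInt_continuous R_CompleteNormedModule); intros; auto. Qed.

Lemma geom_small Q r : 0 <= Q -> 0 < r -> exists n, Q * (/2)^n < r.
Proof.
  intros HQ Hr. destruct (pow_lt_1_zero (/2)) with (y := r / (Q+1)) as [N HN].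
  rewrite Rabs_pos_eq; lra. apply Rdiv_lt_0_compat; lra.
  exists N. specialize (HN N (le_n _)). rewrite Rabs_pos_eq in HN by (apply pow_le; lra).
  assert (H0 : 0 <= (/2)^N) by (apply pow_le; lra).
  apply Rmult_lt_compat_l with (r := Q+1) in HN; [|lra].
  replace ((Q + 1) * (r / (Q + 1))) with r in HN by (field; lra). nra.
Qed.

Lemma geom_zero z Q : 0 <= Q -> (forall n, Rabs z <= Q * (/2)^n) -> z = 0.
Proof.
  intros HQ H. destruct (Req_dec z 0) as [|Hz]; auto. exfalso.
  assert (Hp : 0 < Rabs z) by (apply Rabs_pos_lt; auto).
  destruct (geom_small Q (Rabs z) HQ Hp) as [n Hn]. specialize (H n). lra.
Qed.

Fixpoint Yit (a w0 : R) (G : R -> R -> R) (n : nat) : R -> R :=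
  match n with
  | O => fun _ => w0
  | S n => fun x => w0 + RInt (fun t => G t (Yit a w0 G n t)) a x
  end.

Lemma exp_mono x y : x <= y -> exp x <= exp y.
Proof. intros [H|H]. left; apply exp_increasing; auto. subst; lra. Qed.

Lemma RInt_exp k L a t : 0 < L ->
  RInt (fun s => k * exp (2 * L * (s - a))) a t = k / (2 * L) * (exp (2 * L * (t - a)) - 1).
Proof.
  intros HL.
  rewrite (is_RInt_unique _ a t (minus (k / (2*L) * exp (2 * L * (t - a))) (k / (2*L) * exp (2 * L * (a - a))))).
  - unfold minus, plus, opp; simpl. replace (2 * L * (a - a)) with 0 by ring. rewrite exp_0. field. lra.
  - apply (is_RInt_derive (fun s => k / (2*L) * exp (2 * L * (s - a)))).
    + intros x _. auto_derive; auto. unfold Rminus. field. lra.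
    + intros x _. apply continuity_pt_filterlim. apply derivable_continuous_pt.
      reg.
Qed.

Lemma Y_cont a w0 G : (forall h, (forall t, continuous h t) -> forall t, continuous (fun s => G s (h s)) t) ->
  forall n t, continuous (Yit a w0 G n) t.
Proof.
  intros HG n. induction n; intros t; simpl.
  - apply continuous_const.
  - apply (continuous_plus (fun _ => w0) (fun x => RInt (fun t => G t (Yit a w0 G n t)) a x)).
    apply continuous_const. apply RInt_cont. apply HG. auto.
Qed.

Lemma Y_step a b w0 L G C n : a <= b -> 0 < L ->
  (forall t u v, a <= t <= b -> Rabs (G t u - G t v) <= L * Rabs (u - v)) ->
  (forall h, (forall t, continuous h t) -> forall t, continuous (fun s => G s (h s)) t) ->
  (forall t, a <= t <= b -> Rabs (Yit a w0 G (S n) t - Yit a w0 G n t) <= C * (/2)^n * exp (2 * L * (t - a))) ->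
  (forall t, a <= t <= b -> Rabs (Yit a w0 G (S (S n)) t - Yit a w0 G (S n) t) <= C * (/2)^(S n) * exp (2 * L * (t - a))).
Proof.
  intros Hab HL HLip HG IH t Ht.
  set (g1 := fun s => G s (Yit a w0 G (S n) s)).
  set (g0 := fun s => G s (Yit a w0 G n s)).
  assert (Hc1 : forall s, continuous g1 s) by (apply HG; apply Y_cont; auto).
  assert (Hc0 : forall s, continuous g0 s) by (apply HG; apply Y_cont; auto).
  change (Rabs ((w0 + RInt g1 a t) - (w0 + RInt g0 a t)) <= C * (/2)^(S n) * exp (2 * L * (t - a))).
  replace ((w0 + RInt g1 a t) - (w0 + RInt g0 a t)) with (RInt (fun s => g1 s - g0 s) a t).
  2:{ assert (E := @RInt_minus R_CompleteNormedModule g1 g0 a t (exRc _ _ _ Hc1) (exRc _ _ _ Hc0)).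
        unfold minus, plus, opp in E; simpl in E.
        transitivity (RInt (fun x => g1 x + - g0 x) a t). apply RInt_ext; intros. unfold Rminus; reflexivity. rewrite E. simpl. lra. }
  assert (Hcd : forall s, continuous (fun s => g1 s - g0 s) s).
  { intros s. apply (continuous_minus g1 g0); auto. }
  eapply Rle_trans. apply abs_RInt_le. lra. apply exRc; auto.
  eapply Rle_trans. apply RInt_le with (g := fun s => L * C * (/2)^n * exp (2 * L * (s - a))).
  lra. apply exRc. intros s. apply continuous_Rabs_comp. auto.
  apply exRc. intros s. apply continuity_pt_filterlim. reg.
  intros x Hx. unfold g1, g0. eapply Rle_trans. apply HLip. lra.
  replace (L * C * (/2)^n * exp (2 * L * (x - a))) with (L * (C * (/2)^n * exp (2 * L * (x - a)))) by ring.
  apply Rmult_le_compat_l. lra. apply IH. lra.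
  rewrite RInt_exp by auto.
  assert (HC : 0 <= C * (/2)^n).
  { specialize (IH a (conj (Rle_refl a) Hab)). replace (a - a) with 0 in IH by ring.
    rewrite Rmult_0_r, exp_0, Rmult_1_r in IH. eapply Rle_trans. apply Rabs_pos. exact IH. }
  simpl. assert (0 < exp (2 * L * (t - a))) by apply exp_pos.
  replace (L * C * (/ 2) ^ n / (2 * L) * (exp (2 * L * (t - a)) - 1)) with
    (C * (/ 2) ^ n * /2 * (exp (2 * L * (t - a)) - 1)) by (field; lra).
  nra.
Qed.

Lemma half_pow_le N k : (/2)^(N+k) <= (/2)^N.
Proof.
  rewrite pow_add. assert (0 <= (/2)^N) by (apply pow_le; lra).
  assert ((/2)^k <= 1). { induction k. simpl; lra. simpl. assert (0 <= (/2)^k) by (apply pow_le; lra). lra. }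
  nra.
Qed.

Lemma RInt_diff (g1 g0 : R -> R) a t : (forall s, continuous g1 s) -> (forall s, continuous g0 s) ->
  RInt g1 a t - RInt g0 a t = RInt (fun s => g1 s - g0 s) a t.
Proof.
  intros Hc1 Hc0.
  assert (E := @RInt_minus R_CompleteNormedModule g1 g0 a t (exRc _ _ _ Hc1) (exRc _ _ _ Hc0)).
  unfold minus, plus, opp in E; simpl in E.
  symmetry. transitivity (RInt (fun x => g1 x + - g0 x) a t). apply RInt_ext; intros. unfold Rminus; reflexivity. rewrite E. simpl. lra.
Qed.

Lemma abs3 u v w : Rabs (u + v - w) <= Rabs u + Rabs v + Rabs w.
Proof. unfold Rabs; repeat destruct Rcase_abs; lra. Qed.

Lemma picard a b w0 L G : a < b -> 0 < L ->
  (forall t u v, a <= t <= b -> Rabs (G t u - G t v) <= L * Rabs (u - v)) ->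
  (forall h, (forall t, continuous h t) -> forall t, continuous (fun s => G s (h s)) t) ->
  exists y, (forall t, continuous y t) /\
    forall x, a <= x <= b -> y x = w0 + RInt (fun t => G t (y t)) a x.
Proof.
  intros Hab HL HLip HG.
  set (Y := Yit a w0 G).
  assert (HYc : forall n t, continuous (Y n) t) by (apply Y_cont; auto).
  destruct (continuity_ab_maj (fun t => Rabs (Y 1%nat t - Y 0%nat t)) a b) as [Mx [HMx _]].
  lra. intros c _. apply continuity_pt_filterlim. apply (continuous_Rabs_comp (fun t => Y 1%nat t - Y 0%nat t)).
  apply (continuous_minus (Y 1%nat) (Y 0%nat)); auto.
  set (C := Rabs (Y 1%nat Mx - Y 0%nat Mx)).
  assert (HC : 0 <= C) by apply Rabs_pos.
  assert (HD : forall n t, a <= t <= b -> Rabs (Y (S n) t - Y n t) <= C * (/2)^n * exp (2 * L * (t - a))).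
  { induction n.
    - intros t Ht. simpl pow. eapply Rle_trans. apply (HMx t Ht). fold C.
      assert (1 <= exp (2 * L * (t - a))).
      { eapply Rle_trans. 2: apply exp_ineq1_le. nra. }
      nra.
    - apply Y_step with (b := b); auto. lra. }
  set (E := exp (2 * L * (b - a))).
  assert (HE : 0 < E) by apply exp_pos.
  assert (HD' : forall n t, a <= t <= b -> Rabs (Y (S n) t - Y n t) <= C * E * (/2)^n).
  { intros n t Ht. eapply Rle_trans. apply HD; auto.
    assert (exp (2 * L * (t - a)) <= E) by (unfold E; apply exp_mono; nra).
    assert (0 <= (/2)^n) by (apply pow_le; lra).
    replace (C * E * (/2)^n) with (C * (/2)^n * E) by ring.
    apply Rmult_le_compat_l; auto. apply Rmult_le_pos; auto. }
  set (Bn := fun n => 2 * C * E * (/2)^n).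
  assert (Hk : forall n k t, a <= t <= b -> Rabs (Y (n + k)%nat t - Y n t) <= 2 * C * E * (/2)^n * (1 - (/2)^k)).
  { intros n k t Ht. induction k.
    - rewrite Nat.add_0_r. unfold Rminus at 1. rewrite Rplus_opp_r, Rabs_R0. simpl. lra.
    - replace (n + S k)%nat with (S (n + k)) by lia.
      replace (Y (S (n + k)) t - Y n t) with ((Y (S (n + k)) t - Y (n+k)%nat t) + (Y (n + k)%nat t - Y n t)) by ring.
      eapply Rle_trans. apply Rabs_triang.
      specialize (HD' (n + k)%nat t Ht). rewrite pow_add in HD'.
      replace (2 * C * E * (/ 2) ^ n * (1 - (/ 2) ^ S k)) with
        (C * E * ((/ 2) ^ n * (/ 2) ^ k) + 2 * C * E * (/ 2) ^ n * (1 - (/ 2) ^ k)) by (simpl; field).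
      lra. }
  assert (Hm : forall n m t, (n <= m)%nat -> a <= t <= b -> Rabs (Y m t - Y n t) <= Bn n).
  { intros n m t Hnm Ht. replace m with (n + (m - n))%nat by lia.
    eapply Rle_trans. apply Hk; auto. unfold Bn.
    assert (0 <= (/2)^(m-n)) by (apply pow_le; lra).
    assert (0 <= (/2)^n) by (apply pow_le; lra).
    assert (0 <= 2 * C * E * (/2)^n) by (apply Rmult_le_pos; [nra|lra]). nra. }
  assert (HBmono : forall n m, (n <= m)%nat -> Bn m <= Bn n).
  { intros n m Hnm. unfold Bn. replace m with (n + (m - n))%nat by lia.
    assert (H := half_pow_le n (m - n)). assert (0 <= 2 * C * E) by nra. nra. }
  assert (HBsmall : forall eps, 0 < eps -> exists n, Bn n < eps).
  { intros eps Heps. destruct (geom_small (2 * C * E) eps) as [n Hn]; auto. nra. exists n. unfold Bn. lra. }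
  assert (Hex : forall t, a <= t <= b -> ex_finite_lim_seq (fun n => Y n t)).
  { intros t Ht. apply ex_lim_seq_cauchy_corr. intros eps.
    destruct (HBsmall eps (cond_pos eps)) as [N HN]. exists N. intros n m Hn Hm'.
    destruct (Nat.le_ge_cases n m) as [Hnm|Hnm].
    - rewrite Rabs_minus_sym. eapply Rle_lt_trans. apply Hm; auto. eapply Rle_lt_trans. apply HBmono; eauto. auto.
    - eapply Rle_lt_trans. apply Hm; auto. eapply Rle_lt_trans. apply HBmono; eauto. auto. }
  set (ylim := fun t => real (Lim_seq (fun n => Y n t))).
  assert (Hlim : forall t, a <= t <= b -> is_lim_seq (fun n => Y n t) (ylim t)).
  { intros t Ht. destruct (Hex t Ht) as [l Hl]. unfold ylim. rewrite (is_lim_seq_unique _ _ Hl). simpl. auto. }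
  assert (Hbound : forall n t, a <= t <= b -> Rabs (ylim t - Y n t) <= Bn n).
  { intros n t Ht. apply Rle_plus_epsilon. intros eps Heps.
    destruct (proj2 (is_lim_seq_spec _ _) (Hlim t Ht) (mkposreal eps Heps)) as [N0 HN0].
    set (m := Nat.max N0 n).
    specialize (HN0 m (Nat.le_max_l _ _)). simpl in HN0.
    replace (ylim t - Y n t) with (- (Y m t - ylim t) + (Y m t - Y n t)) by ring.
    eapply Rle_trans. apply Rabs_triang. rewrite Rabs_Ropp.
    assert (Rabs (Y m t - Y n t) <= Bn n) by (apply Hm; auto; apply Nat.le_max_r). lra. }
  assert (Hci : cont_in a b ylim).
  { intros x Hx eps Heps.
    destruct (HBsmall (eps/3)) as [n Hn]. lra.
    destruct (cont_eps (Y n) x (HYc n x) (eps/3)) as [d [Hd Hy]]. lra.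
    exists d. split; auto. intros y Hy' Hyx.
    replace (ylim y - ylim x) with ((ylim y - Y n y) + (Y n y - Y n x) - (ylim x - Y n x)) by ring.
    eapply Rle_lt_trans. apply abs3.
    assert (H1 := Hbound n y Hy'). assert (H2 := Hbound n x Hx). assert (H3 := Hy y Hyx). lra. }
  set (y := fun t => ylim (clamp a b t)).
  assert (Hyc : forall t, continuous y t) by (apply clamp_cont; auto; lra).
  exists y. split; auto.
  intros x Hx.
  assert (Hyx : forall t, a <= t <= b -> y t = ylim t) by (intros; unfold y; rewrite clamp_id; auto).
  apply Rminus_diag_uniq.
  apply (geom_zero _ (2 * C * E * (/2 + (b - a) * L))).
  { apply Rmult_le_pos. nra. nra. }
  intros n.
  set (gn := fun s => G s (Y n s)). set (gy := fun s => G s (y s)).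
  assert (Hgn : forall s, continuous gn s) by (apply HG; auto).
  assert (Hgy : forall s, continuous gy s) by (apply HG; auto).
  assert (HYS : Y (S n) x = w0 + RInt gn a x) by reflexivity.
  replace (y x - (w0 + RInt gy a x)) with ((ylim x - Y (S n) x) + (RInt gn a x - RInt gy a x)).
  2:{ rewrite HYS, Hyx by auto. ring. }
  eapply Rle_trans. apply Rabs_triang.
  rewrite RInt_diff by auto.
  assert (Hi : Rabs (RInt (fun s => gn s - gy s) a x) <= (x - a) * (L * Bn n)).
  { apply abs_RInt_le_const. lra. apply exRc. intros s. apply (continuous_minus gn gy); auto.
    intros t Ht. unfold gn, gy. eapply Rle_trans. apply HLip. lra.
    apply Rmult_le_compat_l. lra. rewrite Hyx by lra. rewrite Rabs_minus_sym. apply Hbound. lra. }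
  assert (Hb1 := Hbound (S n) x Hx).
  assert (HBn : 0 <= Bn n) by (eapply Rle_trans; [apply Rabs_pos| apply (Hbound n a)]; lra).
  assert (Hxa : (x - a) * (L * Bn n) <= (b - a) * (L * Bn n)).
  { apply Rmult_le_compat_r. nra. lra. }
  unfold Bn in *. simpl pow in Hb1.
  assert (Heq : 2 * C * E * (/ 2 * (/ 2) ^ n) + (b - a) * (L * (2 * C * E * (/ 2) ^ n)) =
    2 * C * E * (/ 2 + (b - a) * L) * (/ 2) ^ n) by ring.
  lra.
Qed.

Definition Dm (c u : R) := (u + c + Rabs (u - c)) / 2.

Lemma Dm_ge c u : c <= Dm c u.
Proof. unfold Dm, Rabs; destruct Rcase_abs; lra. Qed.
Lemma Dm_id c u : c <= u -> Dm c u = u.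
Proof. intros; unfold Dm, Rabs; destruct Rcase_abs; lra. Qed.
Lemma Dm_low c u : u <= c -> Dm c u = c.
Proof. intros; unfold Dm, Rabs; destruct Rcase_abs; lra. Qed.
Lemma Dm_lip c u v : Rabs (Dm c u - Dm c v) <= Rabs (u - v).
Proof. unfold Dm, Rabs; repeat destruct Rcase_abs; lra. Qed.

Lemma contG (F : R -> R) c K (h : R -> R) (t : R) : 0 < c -> (forall t, continuous F t) -> (forall t, continuous h t) ->
  continuous (fun s => F s / Dm c (h s) - K) t.
Proof.
  intros Hc HF Hh.
  apply (continuous_minus (fun s => F s / Dm c (h s)) (fun _ => K)); [|apply continuous_const].
  apply (continuous_mult F (fun s => / Dm c (h s))); auto.
  apply continuous_Rinv_comp.
  2:{ assert (H := Dm_ge c (h t)). lra. }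
  unfold Dm.
  apply (continuous_mult (fun s => h s + c + Rabs (h s - c)) (fun _ => /2)); [|apply continuous_const].
  apply (continuous_plus (fun s => h s + c) (fun s => Rabs (h s - c))).
  apply (continuous_plus h (fun _ => c)); auto. apply continuous_const.
  apply (continuous_Rabs_comp (fun s => h s - c)).
  apply (continuous_minus h (fun _ => c)); auto. apply continuous_const.
Qed.

Lemma lipG (F : R -> R) c M u v t : 0 < c -> 0 < F t -> F t <= M ->
  Rabs (F t / Dm c u - F t / Dm c v) <= M / (c * c) * Rabs (u - v).
Proof.
  intros Hc HF HM.
  assert (HU := Dm_ge c u). assert (HV := Dm_ge c v).
  set (U := Dm c u) in *. set (V := Dm c v) in *.
  replace (F t / U - F t / V) with (F t * (V - U) * / (U * V)) by (field; lra).
  rewrite !Rabs_mult. rewrite (Rabs_pos_eq (F t)) by lra.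
  rewrite (Rabs_pos_eq (/ (U * V))) by (left; apply Rinv_0_lt_compat; nra).
  assert (H1 : Rabs (V - U) <= Rabs (u - v)).
  { rewrite Rabs_minus_sym. apply Dm_lip. }
  assert (H2 : / (U * V) <= / (c * c)).
  { apply Rinv_le_contravar. nra. nra. }
  assert (0 <= / (U * V)) by (left; apply Rinv_0_lt_compat; nra).
  assert (0 <= Rabs (V - U)) by apply Rabs_pos.
  unfold Rdiv.
  apply Rle_trans with (M * Rabs (u - v) * / (c * c)).
  2:{ right; ring. }
  apply Rmult_le_compat; try nra.
Qed.

Lemma local_exist K x0 b f w0 : 0 < K -> x0 < b -> cont_in x0 b f ->
  (forall x, x0 <= x <= b -> 0 < f x) -> 0 < w0 ->
  exists y, (forall t, continuous y t) /\ (forall x, x0 <= x <= b -> 0 < y x) /\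
    (forall x, x0 < x < b -> is_derive y x (f x / y x - K)) /\ y x0 = w0.
Proof.
  intros HK Hb Hf Hpos Hw0.
  set (F := fun t => f (clamp x0 b t)).
  assert (HFc : forall t, continuous F t) by (apply clamp_cont; auto; lra).
  assert (HFid : forall t, x0 <= t <= b -> F t = f t) by (intros; unfold F; rewrite clamp_id; auto).
  assert (HFpos : forall t, 0 < F t) by (intros; apply Hpos; apply clamp_in; lra).
  assert (HFpt : forall z, x0 <= z <= b -> continuity_pt F z). intros. apply (proj2 (continuity_pt_filterlim _ _)). apply HFc.
  destruct (continuity_ab_min F x0 b) as [mx [Hmx _]]; [lra|auto|].
  destruct (continuity_ab_maj F x0 b) as [Mx [HMx _]]; [lra|auto|].
  set (m := F mx) in *. set (M := F Mx) in *.
  assert (Hm : 0 < m) by apply HFpos.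
  set (c := Rmin w0 (m / (2 * K))).
  assert (Hc : 0 < c). { unfold c, Rmin; destruct Rle_dec; auto. apply Rdiv_lt_0_compat; lra. }
  assert (Hcw : c <= w0) by apply Rmin_l.
  assert (Hcm : c <= m / (2 * K)) by apply Rmin_r.
  set (G := fun t u => F t / Dm c u - K).
  destruct (picard x0 b w0 (M / (c * c)) G) as [y [Hyc Hy]]; auto.
  { apply Rdiv_lt_0_compat. apply HFpos. nra. }
  { intros t u v Ht. unfold G.
    replace (F t / Dm c u - K - (F t / Dm c v - K)) with (F t / Dm c u - F t / Dm c v) by ring.
    apply lipG; auto. }
  all: try (intros h Hh t; apply contG; auto).
  set (gy := fun t => G t (y t)).
  assert (Hgy : forall t, continuous gy t) by (intros; apply contG; auto).
  assert (Hy0 : y x0 = w0). { rewrite Hy by lra. rewrite RInt_point. simpl. unfold zero; simpl. ring. }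
  assert (Hlow : forall t, x0 <= t <= b -> c <= y t).
  { intros t Ht. destruct (Rle_lt_dec c (y t)) as [|Hlt]; auto. exfalso.
    destruct (continuity_ab_min y x0 t) as [ts [Hts Hts']]; [lra| intros z _; apply (proj2 (continuity_pt_filterlim _ _)); apply Hyc|].
    assert (Hyts : y ts < c) by (specialize (Hts t (conj (proj1 Ht) (Rle_refl t))); lra).
    assert (Hts0 : x0 < ts). { destruct (proj1 Hts') as [|E]; auto. subst ts. lra. }
    assert (Hg : K <= gy ts).
    { unfold gy, G. rewrite Dm_low by lra.
      assert (m <= F ts) by (apply Hmx; lra).
      assert (m / c >= 2 * K).
      { apply Rle_ge. apply Rmult_le_reg_r with c; auto. replace (m / c * c) with m by (field; lra).
        apply Rmult_le_reg_r with (/ (2 * K)). apply Rinv_0_lt_compat; lra.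
        replace (2 * K * c * / (2 * K)) with c by (field; lra). lra. }
      assert (m / c <= F ts / c). { unfold Rdiv. apply Rmult_le_compat_r; auto. left; apply Rinv_0_lt_compat; auto. }
      lra. }
    destruct (cont_eps gy ts (Hgy ts) (K/2)) as [d [Hd Hd']]. lra.
    set (s := Rmax x0 (ts - d/2)).
    assert (Hs1 : x0 <= s) by apply Rmax_l.
    assert (Hs2 : s < ts). { unfold s, Rmax; destruct Rle_dec; lra. }
    assert (Hs3 : ts - d/2 <= s) by apply Rmax_r.
    assert (Hint : y ts - y s = RInt gy s ts).
    { rewrite (Hy ts) by lra. rewrite (Hy s) by lra.
      assert (Ch := @RInt_Chasles R_CompleteNormedModule gy x0 s ts (exRc _ _ _ Hgy) (exRc _ _ _ Hgy)).
      unfold plus in Ch; simpl in Ch. fold gy. rewrite <- Ch. ring. }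
    assert (Hge : RInt (fun _ => K/2) s ts <= RInt gy s ts).
    { apply RInt_le. lra. apply exRc; intros; apply continuous_const. apply exRc; auto.
      intros z Hz. assert (Rabs (z - ts) < d) by (unfold Rabs; destruct Rcase_abs; lra).
      specialize (Hd' z H). unfold Rabs in Hd'; destruct Rcase_abs in Hd'; lra. }
    rewrite RInt_const in Hge. unfold scal in Hge; simpl in Hge; unfold mult in Hge; simpl in Hge.
    assert (y ts <= y s) by (apply Hts; lra).
    assert (0 < (ts - s) * (K/2)) by (apply Rmult_lt_0_compat; lra).
    lra. }
  exists y. split; auto. split.
  { intros x Hx. assert (H := Hlow x Hx). lra. }
  split; auto.
  intros x Hx.
  assert (H1 : is_derive (fun z => RInt gy x0 z) x (gy x)).
  { apply (is_derive_RInt gy (fun z => RInt gy x0 z) x0 x); auto.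
    apply filter_forall. intros z. apply (@RInt_correct R_CompleteNormedModule). apply exRc; auto. }
  assert (H2 := is_derive_plus (fun _ => w0) _ x 0 (gy x) (is_derive_const w0 x) H1).
  unfold plus in H2; simpl in H2. rewrite Rplus_0_l in H2.
  assert (Hv : gy x = f x / y x - K).
  { unfold gy, G. rewrite Dm_id by (apply Hlow; lra). rewrite HFid by lra. reflexivity. }
  rewrite <- Hv.
  apply (is_derive_ext_loc (fun z => w0 + RInt gy x0 z) y); auto.
  assert (He : 0 < Rmin (x - x0) (b - x)) by (apply Rmin_pos; lra).
  exists (mkposreal _ He). intros z Hz. apply ball_R in Hz. simpl in Hz.
  assert (Rabs (z - x) < x - x0) by (eapply Rlt_le_trans; [exact Hz| apply Rmin_l]).
  assert (Rabs (z - x) < b - x) by (eapply Rlt_le_trans; [exact Hz| apply Rmin_r]).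
  unfold Rabs in *; destruct Rcase_abs; rewrite Hy by lra; reflexivity.
Qed.

Lemma local_unique K x0 b f u v : x0 < b -> cont_in x0 b u -> cont_in x0 b v ->
  (forall x, x0 <= x <= b -> 0 < f x) ->
  (forall x, x0 <= x <= b -> 0 < u x) -> (forall x, x0 <= x <= b -> 0 < v x) ->
  (forall x, x0 < x < b -> is_derive u x (f x / u x - K)) ->
  (forall x, x0 < x < b -> is_derive v x (f x / v x - K)) ->
  u x0 = v x0 -> forall x, x0 <= x <= b -> u x = v x.
Proof.
  intros Hb Hu Hv Hf Hup Hvp Hud Hvd H0 x Hx.
  destruct (Req_dec x x0) as [->|Hne]; auto.
  assert (Hx' : x0 < x) by lra.
  set (uh := fun t => u (clamp x0 b t)). set (vh := fun t => v (clamp x0 b t)).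
  assert (Huc : forall t, continuous uh t) by (apply clamp_cont; auto; lra).
  assert (Hvc : forall t, continuous vh t) by (apply clamp_cont; auto; lra).
  set (phi := fun t => (uh t - vh t) * (uh t - vh t)).
  set (dphi := fun t => 2 * (u t - v t) * (f t / u t - f t / v t)).
  destruct (MVT_gen phi x0 x dphi) as [c [Hc Heq]].
  - rewrite Rmin_left, Rmax_right by lra. intros t Ht.
    assert (Hdd := is_derive_minus u v t _ _ (Hud t ltac:(lra)) (Hvd t ltac:(lra))).
    assert (Hm := is_derive_mult (fun t => minus (u t) (v t)) (fun t => minus (u t) (v t)) t _ _ Hdd Hdd Rmult_comm).
    apply (is_derive_ext_loc (fun t => mult (minus (u t) (v t)) (minus (u t) (v t)))).
    + assert (He : 0 < Rmin (t - x0) (b - t)) by (apply Rmin_pos; lra).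
      exists (mkposreal _ He). intros z Hz. apply ball_R in Hz. simpl in Hz.
      assert (Rabs (z - t) < t - x0) by (eapply Rlt_le_trans; [exact Hz| apply Rmin_l]).
      assert (Rabs (z - t) < b - t) by (eapply Rlt_le_trans; [exact Hz| apply Rmin_r]).
      unfold phi, uh, vh. rewrite clamp_id. reflexivity. unfold Rabs in *; destruct Rcase_abs; lra.
    + replace (dphi t) with (plus (mult (minus (f t / u t - K) (f t / v t - K)) (minus (u t) (v t)))
               (mult (minus (u t) (v t)) (minus (f t / u t - K) (f t / v t - K)))).
      exact Hm. unfold dphi, plus, mult, minus, opp; simpl. unfold mult, plus, opp; simpl. ring.
  - rewrite Rmin_left, Rmax_right by lra. intros t Ht.
    apply (proj2 (continuity_pt_filterlim _ _)).
    apply (continuous_mult (fun t => uh t - vh t) (fun t => uh t - vh t));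
    apply (continuous_minus uh vh); auto.
  - rewrite Rmin_left, Rmax_right in Hc by lra.
    assert (Hphi0 : phi x0 = 0). { unfold phi, uh, vh. rewrite clamp_id by lra. rewrite H0. ring. }
    assert (Hd : dphi c <= 0).
    { unfold dphi. assert (0 < u c) by (apply Hup; lra). assert (0 < v c) by (apply Hvp; lra).
      assert (0 < f c) by (apply Hf; lra).
      replace (2 * (u c - v c) * (f c / u c - f c / v c)) with (- (2 * f c * ((u c - v c) * (u c - v c))) / (u c * v c)) by (field; lra).
      unfold Rdiv. assert (0 < / (u c * v c)) by (apply Rinv_0_lt_compat; nra).
      assert (0 <= (u c - v c) * (u c - v c)) by (pose proof (Rle_0_sqr (u c - v c)); unfold Rsqr in *; lra).
      assert (0 <= 2 * f c * ((u c - v c) * (u c - v c)) * / (u c * v c)) by (apply Rmult_le_pos; [apply Rmult_le_pos; lra | lra]). lra. }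
    assert (Hphix : phi x = (u x - v x) * (u x - v x)). { unfold phi, uh, vh. rewrite clamp_id by lra. reflexivity. }
    assert (0 <= - dphi c * (x - x0)) by (apply Rmult_le_pos; lra).
    assert (phi x <= 0) by lra. rewrite Hphix in *. nra.
Qed.

Theorem theorem3 (K x0 alpha : R) (f : R -> R) :
  0 < K -> x0 < alpha ->
  continuous_on_Ico f x0 alpha ->
  (forall x, x0 <= x < alpha -> 0 < f x) ->
  (decreasing_on_Ico f x0 alpha \/ filterlim f (at_left alpha) (locally 0)) ->
  forall w0 : R, 0 < w0 ->
    exists w : R -> R,
      is_global_pos_solution K x0 alpha w0 f w /\
      (forall v : R -> R, is_global_pos_solution K x0 alpha w0 f v ->
         forall x, x0 <= x < alpha -> v x = w x).
Proof.
  intros HK Hxa Hfc Hfp _ w0 Hw0.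
  set (loc := fun b (y : R -> R) => x0 < b < alpha -> (forall t, continuous y t) /\ (forall x, x0 <= x <= b -> 0 < y x) /\
     (forall x, x0 < x < b -> is_derive y x (f x / y x - K)) /\ y x0 = w0).
  assert (Hex : forall b, exists y, loc b y).
  { intros b. destruct (Rlt_dec x0 b) as [H1|H1]; [destruct (Rlt_dec b alpha) as [H2|H2]|].
    - destruct (local_exist K x0 b f w0) as [y Hy]; auto.
      apply (Ico_cont_in x0 alpha); auto. intros; apply Hfp; lra.
      exists y. intros _. exact Hy.
    - exists (fun _ => 0). intros Hh. exfalso. apply H2. apply Hh.
    - exists (fun _ => 0). intros Hh. exfalso. apply H1. apply Hh. }
  set (S := fun b => proj1_sig (constructive_indefinite_description _ (Hex b))).
  assert (HS : forall b, loc b (S b)) by (intros; unfold S; apply proj2_sig).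
  assert (Hagree : forall b b' x, x0 < b < alpha -> x0 < b' < alpha -> x0 <= x -> x <= b -> x <= b' -> S b x = S b' x).
  { intros b b' x Hb Hb' Hx1 Hx2 Hx3.
    destruct (HS b Hb) as [Hc [Hp [Hd Hi]]]. destruct (HS b' Hb') as [Hc' [Hp' [Hd' Hi']]].
    set (b'' := Rmin b b').
    assert (Hb1 : b'' <= b) by apply Rmin_l. assert (Hb2 : b'' <= b') by apply Rmin_r.
    assert (Hb3 : x0 < b'') by (apply Rmin_glb_lt; lra).
    assert (Hb4 : x <= b'') by (apply Rmin_glb; lra).
    apply (local_unique K x0 b'' f (S b) (S b') Hb3 (cont_cont_in _ _ _ Hc) (cont_cont_in _ _ _ Hc')).
    all: try (intros; first [apply Hfp | apply Hp | apply Hp' | apply Hd | apply Hd']; lra).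
    all: try congruence. all: try lra. }
  set (bm := fun x => (x + alpha) / 2).
  set (w := fun x => S (bm x) x).
  assert (Hbm : forall x, x0 <= x < alpha -> x0 < bm x < alpha /\ x < bm x) by (intros; unfold bm; lra).
  assert (Hloc : forall x z, x0 <= x < alpha -> x0 <= z < bm x -> w z = S (bm x) z).
  { intros x z Hx Hz. unfold w. assert (H := Hbm x Hx). assert (Hz' : x0 <= z < alpha) by lra.
    assert (H' := Hbm z Hz'). apply Hagree; lra. }
  exists w. split.
  - split; [|split; [|split]].
    + intros x Hx. apply filterlim_locally. intros eps.
      assert (H := Hbm x Hx). destruct (HS (bm x) (proj1 H)) as [Hc _].
      destruct (cont_eps _ x (Hc x) eps (cond_pos eps)) as [d [Hd Hd']].
      assert (He : 0 < Rmin d (bm x - x)) by (apply Rmin_pos; lra).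
      unfold within. exists (mkposreal _ He). intros z Hz Dz. apply ball_R in Hz. simpl in Hz.
      assert (Rabs (z - x) < d) by (eapply Rlt_le_trans; [exact Hz| apply Rmin_l]).
      assert (Rabs (z - x) < bm x - x) by (eapply Rlt_le_trans; [exact Hz| apply Rmin_r]).
      apply ball_R. rewrite (Hloc x z Hx). rewrite (Hloc x x Hx) by lra. apply Hd'; auto.
      unfold Rabs in *; destruct Rcase_abs; lra.
    + intros x Hx. assert (H := Hbm x Hx). destruct (HS (bm x) (proj1 H)) as [_ [Hp _]].
      unfold w. apply Hp. lra.
    + intros x Hx. assert (Hx' : x0 <= x < alpha) by lra. assert (H := Hbm x Hx').
      destruct (HS (bm x) (proj1 H)) as [_ [_ [Hd _]]].
      apply (is_derive_ext_loc (S (bm x))).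
      * assert (He : 0 < Rmin (x - x0) (bm x - x)) by (apply Rmin_pos; lra).
        exists (mkposreal _ He). intros z Hz. apply ball_R in Hz. simpl in Hz.
        assert (Rabs (z - x) < x - x0) by (eapply Rlt_le_trans; [exact Hz| apply Rmin_l]).
        assert (Rabs (z - x) < bm x - x) by (eapply Rlt_le_trans; [exact Hz| apply Rmin_r]).
        symmetry. apply Hloc; auto. unfold Rabs in *; destruct Rcase_abs; lra.
      * apply Hd. lra.
    + assert (Hx : x0 <= x0 < alpha) by lra. assert (H := Hbm x0 Hx).
      destruct (HS (bm x0) (proj1 H)) as [_ [_ [_ Hi]]]. exact Hi.
  - intros v [Hvc [Hvp [Hvd Hvi]]] x Hx.
    assert (H := Hbm x Hx). destruct (HS (bm x) (proj1 H)) as [Hc [Hp [Hd Hi]]].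
    apply (local_unique K x0 (bm x) f v (S (bm x))).
    all: try lra.
    all: try (apply (Ico_cont_in x0 alpha); auto; lra).
    all: try (apply cont_cont_in; auto).
    all: try (intros; first [apply Hfp | apply Hvp | apply Hp | apply Hvd | apply Hd]; lra).
    all: try congruence.
Qed.
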